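(* Let $r \geq 0$ and $k \geq 2$ be integers. Then the treewidth of the primal graph of the CNF $F_{r,k}$ is at most $2k-1$.
   Context: For a graph $G$, the CNF $CNF(G)$ has a variable $X_u$ for each vertex $u \in V(G)$ and a variable $X_{u,v}=X_{v,u}$ for each edge $\{u,v\} \in E(G)$; its clauses are $(X_u \vee X_{u,v} \vee X_v)$, one for each edge $\{u,v\} \in E(G)$. Let $T_r$ be the complete binary tree of height $r$ (it has $2^{r+1}-1$ nodes). $CT_{r,k}$ is the graph obtained from $T_r$ by replacing each node by a clique on $k$ vertices and, for every edge $\{a,b\}$ of $T_r$, making every vertex of the clique of $a$ adjacent to every vertex of the clique of $b$. $F_{r,k}=CNF(CT_{r,k})$. The primal graph of a CNF has the variables as vertices, two being adjacent iff they occur together in some clause. *)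

(* Defs.v *)
From mathcomp Require Import all_boot.
Set Implicit Arguments.
Unset Strict Implicit.
Unset Printing Implicit Defensive.

(* A (simple) graph on a finite vertex type V is given by a relation
   e : rel V, assumed symmetric and irreflexive where relevant. *)

(* A tree: nonempty, connected, and without cycles (a cycle being a closed
   walk through >= 3 pairwise distinct nodes). *)
Definition is_tree (T : finType) (te : rel T) : Prop :=
  [/\ symmetric te, irreflexive te, 0 < #|T|,
      (forall x y : T, connect te x y) &
      (forall (x : T) (p : seq T),
          path te x p -> uniq (x :: p) -> 2 <= size p -> ~~ te (last x p) x)].

Definition tree_decomposition (V : finType) (e : rel V)
    (T : finType) (te : rel T) (B : T -> {set V}) : Prop :=
  [/\ is_tree te,
      (forall v : V, exists t : T, v \in B t),
      (forall u v : V, e u v -> exists t : T, (u \in B t) && (v \in B t)) &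
      (forall (v : V) (t1 t2 : T), v \in B t1 -> v \in B t2 ->
          connect (fun a b => [&& te a b, v \in B a & v \in B b]) t1 t2)].

(* Width of a decomposition is max bag size minus one; so
   "treewidth (V,e) <= w" means: some tree decomposition has all bags of
   size at most w + 1. *)
Definition treewidth_le (V : finType) (e : rel V) (w : nat) : Prop :=
  exists (T : finType) (te : rel T) (B : T -> {set V}),
    tree_decomposition e te B /\ forall t : T, #|B t| <= w.+1.

(* A CNF over a finite variable type X is a set of clauses; a clause is a
   set of literals (variable, polarity). *)
Definition cnf (X : finType) := {set {set (X * bool)}}.

Definition occurs_in (X : finType) (x : X) (C : {set (X * bool)}) : bool :=
  [exists b : bool, (x, b) \in C].

Definition primal (X : finType) (F : cnf X) : rel X :=
  fun x y => (x != y) && [exists C in F, occurs_in x C && occurs_in y C].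

(* Edge variables X_{u,v} = X_{v,u}: one per (unordered) edge {u,v}. *)
Definition is_edge_set (V : finType) (e : rel V) (s : {set V}) : bool :=
  [exists u, exists v, e u v && (s == [set u; v])].

Definition evar (V : finType) (e : rel V) := {s : {set V} | is_edge_set e s}.

(* Variables of CNF(G): X_u (inl u) and X_{u,v} (inr {u,v}). *)
Definition gvar (V : finType) (e : rel V) : finType := (V + evar e)%type.

(* The clause (X_u \/ X_{u,v} \/ X_v), all literals positive. *)
Definition edge_clause (V : finType) (e : rel V) (u v : V)
    : {set (gvar e * bool)} :=
  [set l : gvar e * bool | l.2 &&
     match l.1 with
     | inl w => (w == u) || (w == v)
     | inr s => val s == [set u; v]
     end].

Definition CNF (V : finType) (e : rel V) : cnf (gvar e) :=
  [set edge_clause e p.1 p.2 | p in [set p : V * V | e p.1 p.2]].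

(* Nodes of T_r (height r, 2^(r+1)-1 nodes), in heap order: node i has
   children 2i+1 and 2i+2; the parent of a node a > 0 is (a-1)/2. *)
Definition Tnode (r : nat) := 'I_(2 ^ r.+1 - 1).

Definition Tadj (r : nat) : rel (Tnode r) :=
  fun a b => ((0 < a) && ((a.-1)./2 == b)) || ((0 < b) && ((b.-1)./2 == a)).

(* Vertices of CT_{r,k}: (tree node, index in its k-clique). *)
Arguments Tadj : clear implicits.

Definition CTV (r k : nat) : finType := (Tnode r * 'I_k)%type.

Definition CTadj (r k : nat) : rel (CTV r k) :=
  fun x y => ((x.1 == y.1) && (x.2 != y.2)) || Tadj r x.1 y.1.

Arguments CTadj : clear implicits.

Definition F_rk (r k : nat) : cnf (gvar (CTadj r k)) := CNF (CTadj r k).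

(* Main.v *)
Require Import Defs.
From mathcomp Require Import all_boot.
From mathcomp Require Import zify.

Set Implicit Arguments.
Unset Strict Implicit.
Unset Printing Implicit Defensive.

Section Gen.
Variables (T : finType) (par : T -> T) (root : T) (rank : T -> nat).
Hypothesis rank_par : forall x, x != root -> rank (par x) < rank x.

Definition pte : rel T :=
  fun x y => ((x != root) && (par x == y)) || ((y != root) && (par y == x)).

Lemma pte_sym : symmetric pte.
Proof. by move=> x y; rewrite /pte orbC. Qed.

Lemma pte_irr : irreflexive pte.
Proof.
move=> x; rewrite /pte orbb; apply/negP => /andP[/rank_par + /eqP E].
by rewrite E ltnn.
Qed.

Lemma conn_root x : connect pte x root.
Proof.
have [n] := ubnP (rank x); elim: n x => // n IH x Hx.
case: (eqVneq x root) => [->|xr]; first exact: connect0.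
have H1 : connect pte (par x) root by apply: IH; have := rank_par xr; lia.
apply: connect_trans H1.
by apply: connect1; rewrite /pte xr eqxx.
Qed.

Lemma seq_max (s : seq T) x :
  exists2 y, y \in x :: s & forall z, z \in x :: s -> rank z <= rank y.
Proof.
elim: s x => [|a s IH] x.
  by exists x => [|z]; rewrite ?inE // => /eqP->.
have [y yin ymax] := IH a.
case: (leqP (rank x) (rank y)) => H.
  exists y; first by rewrite inE yin orbT.
  by move=> z; rewrite inE => /orP[/eqP->//|]; apply: ymax.
exists x; first by rewrite inE eqxx.
move=> z; rewrite inE => /orP[/eqP->//|/ymax]; lia.
Qed.

Lemma pte_tree : is_tree pte.
Proof.
split.
- exact: pte_sym.
- exact: pte_irr.
- by apply/card_gt0P; exists root.
- move=> x y; apply: connect_trans (conn_root x) _.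
  by rewrite (sym_connect_sym pte_sym); exact: conn_root.
- move=> x p Hp Hu Hs; apply/negP => Hl.
  have Hc : cycle pte (x :: p) by rewrite /= rcons_path Hp Hl.
  have [y yin ymax] := seq_max p x.
  case/rot_to: yin => i q Hrot.
  have Hc' : cycle pte (y :: q) by rewrite -Hrot rot_cycle.
  have Hu' : uniq (y :: q) by rewrite -Hrot rot_uniq.
  have Hs' : size (y :: q) = size (x :: p) by rewrite -Hrot size_rot.
  have Hm : forall z, z \in q -> z \in x :: p.
    by move=> z zq; rewrite -(mem_rot i) Hrot inE zq orbT.
  have Hpar : forall z, z \in q -> pte y z -> z = par y.
    move=> z zq; rewrite /pte => /orP[/andP[_ /eqP//]|/andP[zr /eqP E]].
    have := rank_par zr; rewrite E; have := ymax z (Hm z zq); lia.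
  case: q Hrot Hc' Hu' Hs' Hm Hpar => [|q0 [|q1 q]] Hrot Hc' Hu' Hs' Hm Hpar;
    try by move: Hs' => /=; lia.
  have : path pte y (rcons [:: q0, q1 & q] y) := Hc'.
  rewrite rcons_path => /andP[Hp' HL].
  move: Hp'; rewrite [path _ _ _]/= => /andP[H0 _].
  move: HL => /= HL.
  have E0 := Hpar q0 (mem_head _ _) H0.
  have EL : last q1 q = par y.
    by apply: Hpar; [rewrite inE mem_last orbT | rewrite pte_sym].
  move: Hu' => /= /andP[_ /andP[/negP N _]]; apply: N.
  by rewrite E0 -EL mem_last.
Qed.

Variables (V : finType) (B : T -> {set V}) (top : V -> T).
Hypothesis Htop :
  forall v t, v \in B t -> t != top v -> (t != root) && (v \in B (par t)).

Lemma bag_conn v t1 t2 : v \in B t1 -> v \in B t2 ->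
  connect (fun a b => [&& pte a b, v \in B a & v \in B b]) t1 t2.
Proof.
set R := (fun a b => _).
have Rs : symmetric R.
  by move=> a b; rewrite /R pte_sym; case: (v \in B a); case: (v \in B b).
have Ht : forall t, v \in B t -> connect R t (top v).
  move=> t; have [n] := ubnP (rank t); elim: n t => // n IH t Hn Ht.
  case: (eqVneq t (top v)) => [->|tn]; first exact: connect0.
  case/andP: (Htop Ht tn) => tr Hp.
  have H1 : connect R (par t) (top v).
    by apply: IH => //; have := rank_par tr; lia.
  apply: connect_trans H1.
  by apply: connect1; rewrite /R /pte tr eqxx Ht Hp.
move=> H1 H2; apply: connect_trans (Ht _ H1) _.
by rewrite (sym_connect_sym Rs); apply: Ht.
Qed.

End Gen.

Section Concrete.
Variables (r k : nat).
Local Notation V := (CTV r k).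
Local Notation e := (CTadj r k).

Lemma Tn_gt0 : 0 < 2 ^ r.+1 - 1.
Proof. rewrite expnS; have := expn_gt0 2 r; lia. Qed.

Definition root0 : Tnode r := Ordinal Tn_gt0.

Lemma pnode_lt (a : Tnode r) : (a.-1)./2 < 2 ^ r.+1 - 1.
Proof. have := ltn_ord a; lia. Qed.

Definition pnode (a : Tnode r) : Tnode r := Ordinal (pnode_lt a).

Definition TT : finType := (Tnode r + evar e)%type.

Definition maxnode (a b : Tnode r) := if val a < val b then b else a.

Definition att (s : evar e) : Tnode r :=
  if [pick p : V * V | e p.1 p.2 && (val s == [set p.1; p.2])] is Some p
  then maxnode p.1.1 p.2.1 else root0.

Definition tpar (t : TT) : TT :=
  match t with inl a => inl (pnode a) | inr s => inl (att s) end.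
Definition troot : TT := inl root0.
Definition trank (t : TT) : nat :=
  match t with inl a => val a | inr _ => 2 ^ r.+1 end.

Definition bag (t : TT) : {set gvar e} :=
  match t with
  | inl a => [set inl x | x in setX [set a; pnode a] [set: 'I_k]]
  | inr s => inr s |: [set inl x | x in val s]
  end.

Definition ttop (w : gvar e) : TT :=
  match w with inl x => inl x.1 | inr s => inr s end.

Lemma trank_par t : t != troot -> trank (tpar t) < trank t.
Proof.
case: t => [a|s] /=.
  move=> H; have : val a != 0.
    by apply: contra H => /eqP E; apply/eqP; congr inl; apply: val_inj.
  rewrite /pnode /=; lia.
have := ltn_ord (att s); lia.
Qed.

Lemma nat_adj (a b : nat) :
  (a == b) || ((0 < a) && ((a.-1)./2 == b)) || ((0 < b) && ((b.-1)./2 == a)) ->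
  let m := if a < b then b else a in
  ((a == m) || (a == (m.-1)./2)) && ((b == m) || (b == (m.-1)./2)).
Proof. move=> H /=; case: ifP => Hab; lia. Qed.

Lemma att_prop (s : evar e) x :
  x \in val s -> (x.1 == att s) || (x.1 == pnode (att s)).
Proof.
rewrite /att; case: pickP => [p /andP[He /eqP Hs] | Hn].
  rewrite Hs !inE => Hx.
  have : ((p.1.1 : nat) == p.2.1) || ((0 < p.1.1) && ((p.1.1.-1)./2 == p.2.1))
      || ((0 < p.2.1) && ((p.2.1.-1)./2 == p.1.1)).
    move: He; rewrite /CTadj /Tadj => /orP[/andP[/eqP -> _]|]; first by rewrite eqxx.
    by move=> /orP[->|->]; rewrite ?orbT.
  move=> /nat_adj /= /andP[A1 A2].
  rewrite /maxnode; case/orP: Hx => /eqP ->; case: ifP => Hlt /=;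
    rewrite -!val_eqE /= ?Hlt //; move: A1 A2; rewrite Hlt //.
exfalso; move: (valP s); rewrite /is_edge_set => /existsP[u /existsP[v Huv]].
by have := Hn (u, v); rewrite /= Huv.
Qed.

Lemma pnode_root : pnode root0 = root0.
Proof. exact: val_inj. Qed.

Lemma Htop_c w t : w \in bag t -> t != ttop w ->
  (t != troot) && (w \in bag (tpar t)).
Proof.
case: t => [a|s] /=.
  case/imsetP => x; rewrite !inE => /andP[Hx _] -> /=.
  move=> Hne'; have Hne : x.1 != a by apply: contraNneq Hne' => ->.
  move: Hx; rewrite (negbTE Hne) /= => /eqP Hx.
  apply/andP; split.
    apply/negP => /eqP [Ha]; move: Hne; rewrite Hx Ha pnode_root eqxx //.
  by rewrite mem_imset; [rewrite !inE Hx eqxx | move=> ? ? []].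
case/setU1P => [-> |]; first by rewrite eqxx.
case/imsetP => x Hx -> _ /=.
by rewrite mem_imset; [rewrite !inE att_prop | move=> ? ? []].
Qed.

End Concrete.

Theorem lemma1 (r k : nat) (hk : 2 <= k) :
  treewidth_le (primal (F_rk r k)) (2 * k - 1).
Proof.
exists (TT r k), (pte (@tpar r k) (troot r k)), (@bag r k).
split; last first.
  case=> [a|s] /=.
    apply: leq_trans (leq_imset_card _ _) _.
    rewrite cardsX cards2 cardsT card_ord; case: (_ != _) => /=; lia.
  rewrite cardsU1; apply: leq_trans (leq_add (leq_b1 _) (leq_imset_card _ _)) _.
  move: (valP s); rewrite /is_edge_set => /existsP[u /existsP[v /andP[_ /eqP ->]]].
  rewrite cards2; case: (_ != _) => /=; lia.
split.
- exact: (pte_tree (@trank_par r k)).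
- case=> [x|s].
    exists (inl x.1); rewrite mem_imset; last by move=> ? ? [].
    by rewrite !inE eqxx.
  by exists (inr s); rewrite /= setU11.
- move=> x y /andP[_ /existsP[C /andP[/imsetP[p pin ->] /andP[Ox Oy]]]].
  move: pin; rewrite inE => He.
  have Hs : is_edge_set (CTadj r k) [set p.1; p.2].
    by apply/existsP; exists p.1; apply/existsP; exists p.2; rewrite He eqxx.
  pose s0 : evar (CTadj r k) := exist (fun s => is_edge_set (CTadj r k) s) _ Hs.
  exists (inr s0).
  suff Hin : forall w, occurs_in w (edge_clause (CTadj r k) p.1 p.2) ->
      w \in bag (inr s0) by rewrite !Hin.
  move=> w /existsP[b]; rewrite inE /= => /andP[_].
  case: w => [z|s] H /=.
    apply/setU1P; right; apply/imsetP; exists z => //.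
    by rewrite /= !inE.
  apply/setU1P; left; congr inr; apply: val_inj; exact/eqP.
- apply: (bag_conn (@trank_par r k)).
  exact: (@Htop_c r k).
Qed.
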